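(* The energy $W^-_{\mathrm{magic}}\colon\mathrm{GL}^+(2)\to\mathbb{R}$, \[ W^-_{\mathrm{magic}}(F)=\frac{\lambda_{\max}}{\lambda_{\min}}+\log\!\left(\frac{\lambda_{\max}}{\lambda_{\min}}\right)-\log(\lambda_{\max}\lambda_{\min})=\frac{\lambda_{\max}}{\lambda_{\min}}-2\log\lambda_{\min}, \] where $\lambda_{\max}\ge\lambda_{\min}>0$ are the ordered singular values of $F$, is polyconvex.
   Context: $\mathrm{GL}^+(2)=\{F\in\mathbb{R}^{2\times2}:\det F>0\}$. A function $W\colon\mathrm{GL}^+(2)\to\mathbb{R}$ is polyconvex if its extension $\widehat W\colon\mathbb{R}^{2\times2}\to\mathbb{R}\cup\{+\infty\}$ ($\widehat W=W$ on $\mathrm{GL}^+(2)$, $+\infty$ elsewhere) can be written as $\widehat W(F)=P(F,\det F)$ for all $F\in\mathbb{R}^{2\times2}$ with some convex function $P\colon\mathbb{R}^{2\times2}\times\mathbb{R}\to\mathbb{R}\cup\{+\infty\}$. *)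

(* Defs.v *)
From HB Require Import structures.
From mathcomp Require Import all_boot all_order all_algebra.
From mathcomp Require Import all_classical all_reals.
From mathcomp Require Import ereal exp.
Set Implicit Arguments. Unset Strict Implicit. Unset Printing Implicit Defensive.
Import Order.TTheory GRing.Theory Num.Theory.
Local Open Scope ring_scope.

Section Defs.
Variable R : realType.

(* C is symmetric positive semidefinite 2x2, its eigenvalues are the two
   (real, nonnegative) roots of its characteristic polynomial
   X^2 - tr C X + det C, i.e. (tr C +- sqrt(tr C^2 - 4 det C))/2. *)
Definition eig_max_sym2 (C : 'M[R]_2) : R :=
  (\tr C + Num.sqrt (\tr C ^+ 2 - 4 * \det C)) / 2.
Definition eig_min_sym2 (C : 'M[R]_2) : R :=
  (\tr C - Num.sqrt (\tr C ^+ 2 - 4 * \det C)) / 2.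

Definition sv_max (F : 'M[R]_2) : R := Num.sqrt (eig_max_sym2 (F^T *m F)).
Definition sv_min (F : 'M[R]_2) : R := Num.sqrt (eig_min_sym2 (F^T *m F)).

Definition W_magic_minus (F : 'M[R]_2) : R :=
  sv_max F / sv_min F + ln (sv_max F / sv_min F) - ln (sv_max F * sv_min F).

Definition ext_GLp (W : 'M[R]_2 -> R) (F : 'M[R]_2) : \bar R :=
  if 0 < \det F then (W F)%:E else +oo%E.

Definition convex_ext (P : 'M[R]_2 * R -> \bar R) : Prop :=
  (forall x, P x != -oo%E) /\
  (forall (x y : 'M[R]_2 * R) (t : R), 0 < t < 1 ->
     (P ((t *: x.1 + (1 - t) *: y.1)%R, (t * x.2 + (1 - t) * y.2)%R)
       <= t%:E * P x + (1 - t)%:E * P y)%E).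

Definition polyconvex (W : 'M[R]_2 -> R) : Prop :=
  exists P : 'M[R]_2 * R -> \bar R,
    convex_ext P /\ forall F : 'M[R]_2, ext_GLp W F = P (F, \det F).

End Defs.

(* Main.v *)
Set Warnings "-all".
Require Import Defs.
From mathcomp Require Import all_boot all_order all_algebra.
From mathcomp Require Import all_classical all_reals.
From mathcomp Require Import ereal exp.
From mathcomp Require Import lra ring.
Import Order.TTheory GRing.Theory Num.Theory.
Local Open Scope ring_scope.

Lemma det2 (R : comRingType) (A : 'M[R]_2) :
  \det A = A 0 0 * A 1 1 - A 0 1 * A 1 0.
Proof.
rewrite (expand_det_row _ ord0) !big_ord_recl big_ord0 addr0.
rewrite /cofactor !det_mx11 !mxE /=.
rewrite !expr0 expr1 mul1r mulN1r.
by rewrite mulrN; congr (A _ _ * A _ _ - A _ _ * A _ _); apply/val_inj.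
Qed.
Lemma tr2 (R : ringType) (A : 'M[R]_2) : \tr A = A 0 0 + A 1 1.
Proof.
rewrite /mxtrace !big_ord_recl big_ord0 addr0.
by congr (A _ _ + A _ _); apply/val_inj.
Qed.
Lemma mul2 (R : ringType) (A B : 'M[R]_2) i j : (A *m B) i j = A i 0 * B 0 j + A i 1 * B 1 j.
Proof.
rewrite mxE !big_ord_recl big_ord0 addr0.
by congr (A _ _ * B _ _ + A _ _ * B _ _); apply/val_inj.
Qed.
Import Order.TTheory GRing.Theory Num.Theory. Local Open Scope ring_scope.

Section S.
Variable R : realType.

Lemma sq_le (q c : R) : 0 <= q -> 0 <= c -> q ^+ 2 <= c ^+ 2 -> q <= c.
Proof. move=> q0 c0 h; nra. Qed.

Lemma norm2_tri (x1 y1 x2 y2 : R) :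
  Num.sqrt ((x1 + x2) ^+ 2 + (y1 + y2) ^+ 2) <=
  Num.sqrt (x1 ^+ 2 + y1 ^+ 2) + Num.sqrt (x2 ^+ 2 + y2 ^+ 2).
Proof.
set S := Num.sqrt _; set S1 := Num.sqrt _; set S2 := Num.sqrt _.
have hS : S ^+ 2 = (x1 + x2) ^+ 2 + (y1 + y2) ^+ 2 by rewrite sqr_sqrtr // addr_ge0 // sqr_ge0.
have hS1 : S1 ^+ 2 = x1 ^+ 2 + y1 ^+ 2 by rewrite sqr_sqrtr // addr_ge0 // sqr_ge0.
have hS2 : S2 ^+ 2 = x2 ^+ 2 + y2 ^+ 2 by rewrite sqr_sqrtr // addr_ge0 // sqr_ge0.
have g : 0 <= S by exact: sqrtr_ge0.
have g1 : 0 <= S1 by exact: sqrtr_ge0.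
have g2 : 0 <= S2 by exact: sqrtr_ge0.
have cs : x1 * x2 + y1 * y2 <= S1 * S2.
  have [h|h] := lerP (x1 * x2 + y1 * y2) 0; first nra.
  apply: sq_le; [lra | exact: mulr_ge0 | ].
  rewrite exprMn hS1 hS2; have := sqr_ge0 (x1 * y2 - x2 * y1); nra.
apply: sq_le; [done | lra | nra].
Qed.

Lemma norm2_hom (t u v : R) : 0 <= t ->
  Num.sqrt ((t * u) ^+ 2 + (t * v) ^+ 2) = t * Num.sqrt (u ^+ 2 + v ^+ 2).
Proof.
move=> t0; rewrite !exprMn -mulrDr sqrtrM ?sqr_ge0 // sqrtr_sqr ger0_norm //.
Qed.

Lemma norm2_convex (t u1 v1 u2 v2 : R) : 0 <= t <= 1 ->
  Num.sqrt ((t * u1 + (1 - t) * u2) ^+ 2 + (t * v1 + (1 - t) * v2) ^+ 2) <=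
  t * Num.sqrt (u1 ^+ 2 + v1 ^+ 2) + (1 - t) * Num.sqrt (u2 ^+ 2 + v2 ^+ 2).
Proof.
move=> /andP[t0 t1].
rewrite -norm2_hom // -(@norm2_hom (1 - t)) ?subr_ge0 //.
exact: norm2_tri.
Qed.

Definition sstar (b d : R) := (b + Num.sqrt (b ^+ 2 + 4 * d)) / (2 * d).
Definition aff (s b d : R) := 2 * b * s - d * s ^+ 2 + 2 + 2 * ln s.
Definition phi (b d : R) := aff (sstar b d) b d.

Lemma sstar_pos b d : 0 < d -> 0 < sstar b d.
Proof.
move=> d0; rewrite /sstar; set q := Num.sqrt _.
have hq : q ^+ 2 = b ^+ 2 + 4 * d by rewrite sqr_sqrtr //; have := sqr_ge0 b; lra.
have q0 : 0 <= q by exact: sqrtr_ge0.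
have : 0 < b + q by nra.
move=> h; apply: divr_gt0 => //; lra.
Qed.

Lemma sstar_eq b d : 0 < d -> b = d * sstar b d - (sstar b d)^-1.
Proof.
move=> d0; have s0 := @sstar_pos b d d0.
move: s0; rewrite /sstar; set q := Num.sqrt _ => s0.
have hq : q ^+ 2 = b ^+ 2 + 4 * d by rewrite sqr_sqrtr //; have := sqr_ge0 b; lra.
have q0 : 0 <= q by exact: sqrtr_ge0.
have bq : 0 < b + q by nra.
have -> : ((b + q) / (2 * d))^-1 = (q - b) / 2.
  rewrite invf_div; apply: (@mulfI _ (b + q)); first by rewrite gt_eqF.
  rewrite mulrCA divff ?gt_eqF // mulr1 mulrA.
  have -> : (b + q) * (q - b) = q ^+ 2 - b ^+ 2 by ring.
  rewrite hq; lra.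
have -> : d * ((b + q) / (2 * d)) = (b + q) / 2.
  rewrite mulrCA invfM mulrA -mulrA [d * _]mulrC -mulrA mulVf ?gt_eqF // mulr1.
  lra.
lra.
Qed.

Lemma aff_le_phi s b d : 0 < d -> 0 < s -> aff s b d <= phi b d.
Proof.
move=> d0 s0; rewrite /phi.
have t0 := @sstar_pos b d d0; have hb := @sstar_eq b d d0.
set t := sstar b d in t0 hb *.
have hl : ln (s / t) <= s / t - 1.
  have := @le_ln1Dx R (s / t - 1); rewrite addrCA subrr addr0; apply.
  have : 0 < s / t by apply: divr_gt0.
  lra.
rewrite ln_div ?posrE // in hl.
rewrite /aff hb.
have e : 2 * (d * t - t^-1) * t - d * t ^+ 2 + 2 + 2 * ln t -
         (2 * (d * t - t^-1) * s - d * s ^+ 2 + 2 + 2 * ln s) =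
         d * (t - s) ^+ 2 + 2 * ((ln t - ln s) - 1 + s / t).
  by field; rewrite gt_eqF.
rewrite -subr_ge0 e.
have : 0 <= d * (t - s) ^+ 2 by apply: mulr_ge0; [lra | apply: sqr_ge0].
lra.
Qed.

Lemma aff_mono s b1 b2 d : 0 < s -> b1 <= b2 -> aff s b1 d <= aff s b2 d.
Proof. move=> s0 h; rewrite /aff; nra. Qed.

Lemma aff_lin s t b1 b2 d1 d2 :
  aff s (t * b1 + (1 - t) * b2) (t * d1 + (1 - t) * d2) =
  t * aff s b1 d1 + (1 - t) * aff s b2 d2.
Proof. rewrite /aff; ring. Qed.


Lemma phi_xy (x y : R) : 0 < x -> 0 < y ->
  phi (x - y) (x * y) = x / y + ln (x / y) - ln (x * y).
Proof.
move=> x0 y0.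
have hs : sstar (x - y) (x * y) = y^-1.
  rewrite /sstar.
  have -> : (x - y) ^+ 2 + 4 * (x * y) = (x + y) ^+ 2 by ring.
  rewrite sqrtr_sqr ger0_norm; last lra.
  field; apply/andP; split; rewrite gt_eqF //.
rewrite /phi hs /aff lnV ?posrE // ln_div ?posrE // lnM ?posrE //.
by field; rewrite gt_eqF.
Qed.

Definition Am (F : 'M[R]_2) := Num.sqrt ((F 0 0 + F 1 1) ^+ 2 + (F 0 1 - F 1 0) ^+ 2).
Definition Bm (F : 'M[R]_2) := Num.sqrt ((F 0 0 - F 1 1) ^+ 2 + (F 0 1 + F 1 0) ^+ 2).

Lemma W_eq (F : 'M[R]_2) : 0 < \det F -> W_magic_minus F = phi (Bm F) (\det F).
Proof.
move=> dF.
have hA : Am F ^+ 2 = (F 0 0 + F 1 1) ^+ 2 + (F 0 1 - F 1 0) ^+ 2.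
  by rewrite sqr_sqrtr // addr_ge0 // sqr_ge0.
have hB : Bm F ^+ 2 = (F 0 0 - F 1 1) ^+ 2 + (F 0 1 + F 1 0) ^+ 2.
  by rewrite sqr_sqrtr // addr_ge0 // sqr_ge0.
have A0 : 0 <= Am F by exact: sqrtr_ge0.
have B0 : 0 <= Bm F by exact: sqrtr_ge0.
have hdet : \det F = (Am F ^+ 2 - Bm F ^+ 2) / 4.
  rewrite hA hB det2; by field.
have hdC : \det (F^T *m F) = \det F ^+ 2 by rewrite det_mulmx det_tr expr2.
have htr : \tr (F^T *m F) = (Am F ^+ 2 + Bm F ^+ 2) / 2.
  rewrite tr2 !mul2 !mxE hA hB; by field.
have AB : Bm F < Am F.
  have : 0 < Am F ^+ 2 - Bm F ^+ 2 by move: dF; rewrite hdet pmulr_lgt0.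
  case: (lerP (Am F) (Bm F)) => // h.
  have : 0 <= (Bm F - Am F) * (Am F + Bm F) by apply: mulr_ge0; lra.
  nra.
set A := Am F in hA A0 hdet htr AB *; set B := Bm F in hB B0 hdet htr AB *.
have hsq : Num.sqrt (\tr (F^T *m F) ^+ 2 - 4 * \det (F^T *m F)) = A * B.
  rewrite hdC htr hdet.
  have -> : ((A ^+ 2 + B ^+ 2) / 2) ^+ 2 - 4 * ((A ^+ 2 - B ^+ 2) / 4) ^+ 2 = (A * B) ^+ 2.
    by field.
  by rewrite sqrtr_sqr ger0_norm // mulr_ge0.
have hmax : sv_max F = (A + B) / 2.
  rewrite /sv_max /eig_max_sym2 hsq htr.
  have -> : ((A ^+ 2 + B ^+ 2) / 2 + A * B) / 2 = ((A + B) / 2) ^+ 2 by field.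
  by rewrite sqrtr_sqr ger0_norm //; lra.
have hmin : sv_min F = (A - B) / 2.
  rewrite /sv_min /eig_min_sym2 hsq htr.
  have -> : ((A ^+ 2 + B ^+ 2) / 2 - A * B) / 2 = ((A - B) / 2) ^+ 2 by field.
  by rewrite sqrtr_sqr ger0_norm //; lra.
have -> : B = (A + B) / 2 - (A - B) / 2 by field.
have -> : \det F = (A + B) / 2 * ((A - B) / 2) by rewrite hdet; by field.
rewrite /W_magic_minus hmax hmin phi_xy //; lra.
Qed.


Lemma Bm_convex (t : R) (F1 F2 : 'M[R]_2) : 0 <= t <= 1 ->
  Bm (t *: F1 + (1 - t) *: F2) <= t * Bm F1 + (1 - t) * Bm F2.
Proof.
move=> ht; rewrite /Bm !mxE.
have -> : t * F1 0 0 + (1 - t) * F2 0 0 - (t * F1 1 1 + (1 - t) * F2 1 1) =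
  t * (F1 0 0 - F1 1 1) + (1 - t) * (F2 0 0 - F2 1 1) by ring.
have -> : t * F1 0 1 + (1 - t) * F2 0 1 + (t * F1 1 0 + (1 - t) * F2 1 0) =
  t * (F1 0 1 + F1 1 0) + (1 - t) * (F2 0 1 + F2 1 0) by ring.
exact: norm2_convex.
Qed.

Definition Pfun (x : 'M[R]_2 * R) : \bar R :=
  if 0 < x.2 then (phi (Bm x.1) x.2)%:E else +oo%E.

Lemma Pfun_convex : convex_ext Pfun.
Proof.
split.
  by move=> x; rewrite /Pfun; case: ifP.
move=> [F1 d1] [F2 d2] t /andP[t0 t1] /=.
have ht1 : 0 < 1 - t by lra.
rewrite /Pfun /=.
have [h1|h1] := ltrP 0 d1; last first.
  rewrite mulry gtr0_sg // mul1e addye ?leey //.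
  case: ifP => _; [by rewrite -EFinM | by rewrite mulry gtr0_sg // mul1e].
have [h2|h2] := ltrP 0 d2; last first.
  by rewrite [X in (_ + X)%E]mulry gtr0_sg // mul1e addey ?leey // -EFinM.
have hd : 0 < t * d1 + (1 - t) * d2.
  by apply: addr_gt0; apply: mulr_gt0.
rewrite hd -!EFinM -EFinD lee_fin.
rewrite {1}/phi.
set s := sstar (Bm (t *: F1 + (1 - t) *: F2)) (t * d1 + (1 - t) * d2).
have s0 : 0 < s by exact: sstar_pos.
have hB := @Bm_convex t F1 F2 ltac:(apply/andP; split; lra).
apply: le_trans; first exact: (@aff_mono s _ _ _ s0 hB).
rewrite aff_lin.
apply: lerD; apply: ler_wpM2l; try lra; exact: aff_le_phi.
Qed.

End S.

Theorem lemma5p1 (R : realType) : polyconvex (@W_magic_minus R).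
Proof.
exists (@Pfun R); split; first exact: Pfun_convex.
move=> F; rewrite /ext_GLp /Pfun /=.
have [h|h] := ltrP 0 (\det F) => //.
by rewrite W_eq.
Qed.
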